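(* Let $\mathbb{E}$ be a regular category, $\Sigma$ a fibrational class of split epimorphisms, and suppose $\mathbb{E}$ is a $\Sigma$-Mal'tsev category. Let $f\colon X\to Y$ be a regular epimorphism and $S$ a $\Sigma$-relation on $X$. Then the direct image $f(S)$ of $S$ along $f$ is a transitive relation on $Y$. In particular, the direct image along a regular epimorphism of a $\Sigma$-equivalence relation is an equivalence relation.
   Context: A split epimorphism is a pair $(f,s)$ with $fs=1$. A class $\Sigma$ of split epimorphisms is fibrational if it contains all split epimorphisms $(f,s)$ with $f$ invertible and is stable under pullback along any morphism. A pair of morphisms with common codomain $Z$ is jointly extremally epic if it factors jointly through no non-invertible monomorphism into $Z$. $\mathbb{E}$ is $\Sigma$-Mal'tsev if for every split epimorphism $(f,s)\colon X\rightleftarrows Y$ in $\Sigma$ and every split epimorphism $(g,t)$ with $g\colon Y'\to Y$, letting $X'=Y'\times_YX$, $s'=(1_{Y'},sg)$, $\bar t=(tf,1_X)$, the pair $(s',\bar t)$ is jointly extremally epic. A $\Sigma$-relation is a reflexive relation $(d_0,d_1)\colon S\rightarrowtail X\times X$ with reflexivity $s_0$ such that $(d_0,s_0)\in\Sigma$; a $\Sigma$-equivalence relation is an equivalence relation which is a $\Sigma$-relation. The direct image $f(S)$ is the image (regular epi–mono factorization) of $(f\times f)\circ(d_0,d_1)\colon S\to Y\times Y$. *)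

(* Defs.v *)
Record Category := {
  Ob :> Type;
  Hom : Ob -> Ob -> Type;
  idm : forall A : Ob, Hom A A;
  comp : forall A B C : Ob, Hom B C -> Hom A B -> Hom A C;
  comp_idl : forall A B (f : Hom A B), comp A B B (idm B) f = f;
  comp_idr : forall A B (f : Hom A B), comp A A B f (idm A) = f;
  comp_assoc : forall A B C D (h : Hom C D) (g : Hom B C) (f : Hom A B),
      comp A C D h (comp A B C g f) = comp A B D (comp B C D h g) f
}.

Arguments Hom {c} _ _.
Arguments idm {c} A.
Arguments comp {c A B C} _ _.
Notation "g ∘ f" := (comp g f) (at level 40, left associativity).

Section Defs.
Context {C : Category}.

Definition is_mono {A B : C} (m : Hom A B) : Prop :=
  forall Z (u v : Hom Z A), m ∘ u = m ∘ v -> u = v.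

Definition is_iso {A B : C} (f : Hom A B) : Prop :=
  exists g : Hom B A, g ∘ f = idm A /\ f ∘ g = idm B.

Definition is_terminal (T : C) : Prop :=
  forall A : C, exists t : Hom A T, forall t' : Hom A T, t' = t.

Definition is_pullback {A B Z P : C} (f : Hom A Z) (g : Hom B Z)
    (p1 : Hom P A) (p2 : Hom P B) : Prop :=
  f ∘ p1 = g ∘ p2 /\
  forall Q (q1 : Hom Q A) (q2 : Hom Q B), f ∘ q1 = g ∘ q2 ->
    exists u : Hom Q P, p1 ∘ u = q1 /\ p2 ∘ u = q2 /\
      forall u' : Hom Q P, p1 ∘ u' = q1 -> p2 ∘ u' = q2 -> u' = u.

Definition is_coequalizer {A B Q : C} (u v : Hom A B) (q : Hom B Q) : Prop :=
  q ∘ u = q ∘ v /\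
  forall Z (h : Hom B Z), h ∘ u = h ∘ v ->
    exists k : Hom Q Z, k ∘ q = h /\ forall k' : Hom Q Z, k' ∘ q = h -> k' = k.

Definition is_regular_epi {B Q : C} (q : Hom B Q) : Prop :=
  exists (A : C) (u v : Hom A B), is_coequalizer u v q.

Definition regular_category : Prop :=
  (exists T : C, is_terminal T) /\
  (forall A B Z (f : Hom A Z) (g : Hom B Z),
      exists P (p1 : Hom P A) (p2 : Hom P B), is_pullback f g p1 p2) /\
  (forall A Z (f : Hom A Z) K (p1 p2 : Hom K A), is_pullback f f p1 p2 ->
      exists Q (q : Hom A Q), is_coequalizer p1 p2 q) /\
  (forall A B Z (f : Hom A Z) (g : Hom B Z) P (p1 : Hom P A) (p2 : Hom P B),
      is_pullback f g p1 p2 -> is_regular_epi f -> is_regular_epi p2).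

Definition split_epi_class :=
  forall X Y : C, Hom X Y -> Hom Y X -> Prop.

Definition fibrational (Sig : split_epi_class) : Prop :=
  (forall X Y (f : Hom X Y) (s : Hom Y X), Sig X Y f s -> f ∘ s = idm Y) /\
  (forall X Y (f : Hom X Y) (s : Hom Y X), f ∘ s = idm Y -> is_iso f ->
      Sig X Y f s) /\
  (forall X Y (f : Hom X Y) (s : Hom Y X), Sig X Y f s ->
     forall Y' (g : Hom Y' Y) X' (pi1 : Hom X' Y') (pi2 : Hom X' X),
       is_pullback g f pi1 pi2 ->
       forall s' : Hom Y' X', pi1 ∘ s' = idm Y' -> pi2 ∘ s' = s ∘ g ->
         Sig X' Y' pi1 s').

Definition jointly_extremally_epic {A B Z : C} (a : Hom A Z) (b : Hom B Z)
  : Prop :=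
  forall M (m : Hom M Z) (a' : Hom A M) (b' : Hom B M),
    is_mono m -> m ∘ a' = a -> m ∘ b' = b -> is_iso m.

Definition Sigma_Maltsev (Sig : split_epi_class) : Prop :=
  forall X Y (f : Hom X Y) (s : Hom Y X), Sig X Y f s ->
  forall Y' (g : Hom Y' Y) (t : Hom Y Y'), g ∘ t = idm Y ->
  forall X' (pi1 : Hom X' Y') (pi2 : Hom X' X), is_pullback g f pi1 pi2 ->
  forall (s' : Hom Y' X') (tb : Hom X X'),
    pi1 ∘ s' = idm Y' -> pi2 ∘ s' = s ∘ g ->
    pi1 ∘ tb = t ∘ f -> pi2 ∘ tb = idm X ->
    jointly_extremally_epic s' tb.

(* A relation on X: a jointly monic pair (d0, d1) : S -> X
   (equivalently, a monomorphism (d0,d1) : S >-> X x X). *)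
Definition jointly_monic {S X Y : C} (d0 : Hom S X) (d1 : Hom S Y) : Prop :=
  forall Z (u v : Hom Z S), d0 ∘ u = d0 ∘ v -> d1 ∘ u = d1 ∘ v -> u = v.

Definition is_relation {S X : C} (d0 d1 : Hom S X) : Prop :=
  jointly_monic d0 d1.

Definition reflexive_relation_with {S X : C} (d0 d1 : Hom S X)
    (s0 : Hom X S) : Prop :=
  is_relation d0 d1 /\ d0 ∘ s0 = idm X /\ d1 ∘ s0 = idm X.

Definition reflexive_relation {S X : C} (d0 d1 : Hom S X) : Prop :=
  exists s0 : Hom X S, reflexive_relation_with d0 d1 s0.

Definition symmetric_relation {S X : C} (d0 d1 : Hom S X) : Prop :=
  is_relation d0 d1 /\
  exists sg : Hom S S, d0 ∘ sg = d1 /\ d1 ∘ sg = d0.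

Definition transitive_relation {S X : C} (d0 d1 : Hom S X) : Prop :=
  is_relation d0 d1 /\
  forall P (p q : Hom P S), is_pullback d1 d0 p q ->
    exists t : Hom P S, d0 ∘ t = d0 ∘ p /\ d1 ∘ t = d1 ∘ q.

Definition equivalence_relation {S X : C} (d0 d1 : Hom S X) : Prop :=
  reflexive_relation d0 d1 /\ symmetric_relation d0 d1 /\
  transitive_relation d0 d1.

Definition Sigma_relation (Sig : split_epi_class) {S X : C}
    (d0 d1 : Hom S X) : Prop :=
  exists s0 : Hom X S, reflexive_relation_with d0 d1 s0 /\ Sig S X d0 s0.

Definition Sigma_equivalence_relation (Sig : split_epi_class) {S X : C}
    (d0 d1 : Hom S X) : Prop :=
  equivalence_relation d0 d1 /\ Sigma_relation Sig d0 d1.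

(* (I, r0, r1) is the direct image f(S) of the relation (d0,d1) : S -> X
   along f : X -> Y: the (regular epi, mono) factorization
   S --e-->> I >--(r0,r1)--> Y x Y of (f d0, f d1). *)
Definition direct_image {S X Y I : C} (d0 d1 : Hom S X) (f : Hom X Y)
    (e : Hom S I) (r0 r1 : Hom I Y) : Prop :=
  is_regular_epi e /\ jointly_monic r0 r1 /\
  r0 ∘ e = f ∘ d0 /\ r1 ∘ e = f ∘ d1.

End Defs.

(* Main.v *)
Require Import Defs.

Section H.
Context {C : Category}.

Lemma cA {A B D E : C} (h : Hom D E) (g : Hom B D) (f : Hom A B) :
  h ∘ (g ∘ f) = (h ∘ g) ∘ f.
Proof. apply comp_assoc. Qed.

Lemma strong_lemma {A B M Z0 Z1 : C} (c : Hom A B) (m0 : Hom M Z0) (m1 : Hom M Z1)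
  (H : Hom A M) (v0 : Hom B Z0) (v1 : Hom B Z1) :
  is_regular_epi c -> jointly_monic m0 m1 -> m0 ∘ H = v0 ∘ c -> m1 ∘ H = v1 ∘ c ->
  exists d : Hom B M, m0 ∘ d = v0 /\ m1 ∘ d = v1.
Proof.
  intros [K [u [v [Hcu Hco]]]] Hjm E0 E1.
  assert (Hu : H ∘ u = H ∘ v).
  { apply Hjm.
    - rewrite !cA, E0, <- !cA, Hcu; reflexivity.
    - rewrite !cA, E1, <- !cA, Hcu; reflexivity. }
  destruct (Hco _ H Hu) as [k [Hk _]].
  exists k. split.
  - assert (Hv : (v0 ∘ c) ∘ u = (v0 ∘ c) ∘ v) by (rewrite <- !cA, Hcu; reflexivity).
    destruct (Hco _ _ Hv) as [k0 [Hk0 Hun]].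
    rewrite (Hun (m0 ∘ k)), (Hun v0); auto.
    rewrite <- cA, Hk; auto.
  - assert (Hv : (v1 ∘ c) ∘ u = (v1 ∘ c) ∘ v) by (rewrite <- !cA, Hcu; reflexivity).
    destruct (Hco _ _ Hv) as [k0 [Hk0 Hun]].
    rewrite (Hun (m1 ∘ k)), (Hun v1); auto.
    rewrite <- cA, Hk; auto.
Qed.
Lemma trans_part (Sig : @split_epi_class C) :
  @regular_category C -> Sigma_Maltsev Sig ->
  forall (X Y : C) (f : Hom X Y), is_regular_epi f ->
  forall (S : C) (d0 d1 : Hom S X),
  forall (I : C) (e : Hom S I) (r0 r1 : Hom I Y),
    direct_image d0 d1 f e r0 r1 ->
    Sigma_relation Sig d0 d1 -> transitive_relation r0 r1.
Proof.
  intros [[T HT] [Hpb [_ Hstab]]] HM X Y f Hf S d0 d1 I e r0 r1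
    [He [Hjm [Er0 Er1]]] [s0 [[_ [Hs00 Hs01]] HSig]].
  split; [exact Hjm|].
  intros P p q [Epq _].
  destruct (HT Y) as [tY HtY].
  destruct (Hpb _ _ _ tY tY) as [YY [pr0 [pr1 Hprod]]].
  assert (pair : forall Z (a0 a1 : Hom Z Y), exists u : Hom Z YY,
     pr0 ∘ u = a0 /\ pr1 ∘ u = a1).
  { intros Z a0 a1. destruct (HT Z) as [tZ HtZ].
    destruct Hprod as [_ Hu]. destruct (Hu Z a0 a1) as [u [U0 [U1 _]]].
    - rewrite (HtZ (tY ∘ a0)), (HtZ (tY ∘ a1)); reflexivity.
    - exists u; auto. }
  assert (pext : forall Z (u v : Hom Z YY), pr0 ∘ u = pr0 ∘ v -> pr1 ∘ u = pr1 ∘ v -> u = v).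
  { intros Z u v E0 E1. destruct Hprod as [Hc Hu].
    destruct (Hu Z (pr0 ∘ v) (pr1 ∘ v)) as [w [_ [_ Hw]]].
    - rewrite !cA, Hc; reflexivity.
    - rewrite (Hw u), (Hw v); auto. }
  destruct (Hpb _ _ _ e p) as [P1 [a1 [a2 Ha]]].
  pose proof (Hstab _ _ _ _ _ _ _ _ Ha He) as Ra2.
  destruct (Hpb _ _ _ e (q ∘ a2)) as [P2 [b1 [b2 Hb]]].
  pose proof (Hstab _ _ _ _ _ _ _ _ Hb He) as Rb2.
  destruct Ha as [Ea Ha']. destruct Hb as [Eb Hb'].
  destruct (Hpb _ _ _ (f ∘ d1) f) as [Y' [y1 [y2 Hy]]].
  destruct Hy as [Ey Hy'].
  destruct (Hy' X s0 (idm X)) as [t [Et1 [Et2 _]]].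
  { rewrite comp_idr, <- cA, Hs01, comp_idr; reflexivity. }
  destruct (Hpb _ _ _ y2 d0) as [X' [pi1 [pi2 HX]]].
  destruct HX as [EX HX'].
  destruct (HX' Y' (idm Y') (s0 ∘ y2)) as [s' [Es1 [Es2 _]]].
  { rewrite comp_idr, cA, Hs00, comp_idl; reflexivity. }
  destruct (HX' S (t ∘ d0) (idm S)) as [tb [Etb1 [Etb2 _]]].
  { rewrite cA, Et2, comp_idl, comp_idr; reflexivity. }
  assert (JE := HM S X d0 s0 HSig Y' y2 t Et2 X' pi1 pi2 (conj EX HX') s' tb
                   Es1 Es2 Etb1 Etb2).
  set (a0 := f ∘ d0 ∘ y1 ∘ pi1). set (a1' := f ∘ d1 ∘ pi2).
  destruct (pair X' a0 a1') as [ax [Ax0 Ax1]].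
  destruct (pair I r0 r1) as [rr [Rr0 Rr1]].
  destruct (Hpb _ _ _ ax rr) as [M [m [i HMpb]]].
  destruct HMpb as [Em HMpb'].
  assert (Em0 : a0 ∘ m = r0 ∘ i) by (rewrite <- Ax0, <- Rr0, <- !cA, Em; reflexivity).
  assert (Em1 : a1' ∘ m = r1 ∘ i) by (rewrite <- Ax1, <- Rr1, <- !cA, Em; reflexivity).
  assert (Hmono : is_mono m).
  { intros Z u v Euv.
    assert (Eiv : i ∘ u = i ∘ v).
    { apply Hjm.
      - rewrite !cA, <- Em0, <- !cA, Euv; reflexivity.
      - rewrite !cA, <- Em1, <- !cA, Euv; reflexivity. }
    destruct (HMpb' Z (m ∘ v) (i ∘ v)) as [w [_ [_ Hw]]].
    - rewrite !cA, Em; reflexivity.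
    - rewrite (Hw u), (Hw v); auto. }
  destruct (HMpb' Y' s' (e ∘ y1)) as [sm [Esm1 [Esm2 _]]].
  { apply pext.
    - rewrite !cA, Ax0, Rr0. unfold a0. rewrite <- !cA, Es1, comp_idr, !cA, Er0; reflexivity.
    - rewrite !cA, Ax1, Rr1. unfold a1'. rewrite <- !cA, Es2. rewrite (cA d1), Hs01, comp_idl, cA, Er1, Ey; reflexivity. }

  destruct (HMpb' S tb e) as [tm [Etm1 [Etm2 _]]].
  { apply pext.
    - rewrite !cA, Ax0, Rr0. unfold a0. rewrite <- !cA, Etb1, (cA y1), Et1,
        (cA d0), Hs00, comp_idl, Er0; reflexivity.
    - rewrite !cA, Ax1, Rr1. unfold a1'. rewrite <- !cA, Etb2, comp_idr, Er1; reflexivity. }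
  destruct (JE M m sm tm Hmono Esm1 Etm1) as [n [_ Hmn]].
  set (h := i ∘ n).
  assert (Eh0 : r0 ∘ h = a0) by (unfold h; rewrite cA, <- Em0, <- cA, Hmn, comp_idr; reflexivity).
  assert (Eh1 : r1 ∘ h = a1') by (unfold h; rewrite cA, <- Em1, <- cA, Hmn, comp_idr; reflexivity).
  assert (Eb' : f ∘ d1 ∘ (a1 ∘ b2) = f ∘ d0 ∘ b1).
  { rewrite <- Er1, <- Er0, <- !cA, (cA e a1), Ea. rewrite Eb, !cA, Epq; reflexivity.
 }
  destruct (Hy' P2 (a1 ∘ b2) (d0 ∘ b1)) as [u' [Eu1 [Eu2 _]]].
  { rewrite Eb', cA; reflexivity. }
  destruct (HX' P2 u' b1) as [v [Ev1 [Ev2 _]]].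
  { rewrite Eu2; reflexivity. }
  destruct (strong_lemma b2 r0 r1 (h ∘ v) (r0 ∘ p ∘ a2) (r1 ∘ q ∘ a2) Rb2 Hjm)
    as [d [Ed0 Ed1]].
  { rewrite cA, Eh0. unfold a0. rewrite <- !cA, Ev1, Eu1. rewrite (cA f), <- Er0, <- cA, (cA e), Ea, !cA; reflexivity. }
  { rewrite cA, Eh1. unfold a1'. rewrite <- !cA, Ev2. rewrite (cA f), <- Er1, <- cA, Eb, !cA; reflexivity. }
  destruct (strong_lemma a2 r0 r1 d (r0 ∘ p) (r1 ∘ q) Ra2 Hjm Ed0 Ed1) as [tt [Et0 Et1']].
  exists tt; auto.
Qed.
End H.

Theorem theorem7p8 (C : Category) (Sig : @split_epi_class C) :
  @regular_category C -> fibrational Sig -> Sigma_Maltsev Sig ->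
  forall (X Y : C) (f : Hom X Y), is_regular_epi f ->
  forall (S : C) (d0 d1 : Hom S X),
  forall (I : C) (e : Hom S I) (r0 r1 : Hom I Y),
    direct_image d0 d1 f e r0 r1 ->
    (Sigma_relation Sig d0 d1 -> transitive_relation r0 r1) /\
    (Sigma_equivalence_relation Sig d0 d1 -> equivalence_relation r0 r1).
Proof.
  intros HR _ HM X Y f Hf S d0 d1 I e r0 r1 HD.
  pose proof (trans_part Sig HR HM X Y f Hf S d0 d1 I e r0 r1 HD) as Htr.
  split; [exact Htr|].
  intros [[[s0 [_ [Hs0 Hs1]]] [[_ [sg [Sg0 Sg1]]] _]] HSr].
  destruct HD as [He [Hjm [Er0 Er1]]].
  split; [|split].
  - destruct (strong_lemma f r0 r1 (e ∘ s0) (idm Y) (idm Y) Hf Hjm) as [k [K0 K1]].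
    + rewrite cA, Er0, <- cA, Hs0, comp_idr, comp_idl; reflexivity.
    + rewrite cA, Er1, <- cA, Hs1, comp_idr, comp_idl; reflexivity.
    + exists k. repeat split; auto.
  - split; [exact Hjm|].
    destruct (strong_lemma e r0 r1 (e ∘ sg) r1 r0 He Hjm) as [k [K0 K1]].
    + rewrite cA, Er0, <- cA, Sg0, Er1; reflexivity.
    + rewrite cA, Er1, <- cA, Sg1, Er0; reflexivity.
    + exists k; auto.
  - apply Htr; exact HSr.
Qed.
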